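(* Let $G$ be a directed graph with vertices $s,t$, $k\ge1$, and $e\in E(G)$. The multiplicity function $\mu_e:U^k_{\mathrm{lr}}\to\mathbb N$ is modular on the lattice $L^*$, i.e. $\mu_e(C_1\vee C_2)+\mu_e(C_1\wedge C_2)=\mu_e(C_1)+\mu_e(C_2)$ for all $C_1,C_2\in L^*$.
   Context: An $s$-$t$ cut of a directed graph $G$ is a set $X\subseteq E(G)$ such that removing $X$ leaves no directed $s$-$t$ path; $\Gamma_G(s,t)$ is the set of $s$-$t$ cuts of minimum cardinality $\lambda(G)$. Fix a maximum-size collection $\mathcal P$ of pairwise edge-disjoint directed $s$-$t$ paths (each minimum $s$-$t$ cut contains exactly one edge of each path in $\mathcal P$). For $X,Y\in\Gamma_G(s,t)$, $S_{\min}(X\cup Y)$ (resp. $S_{\max}(X\cup Y)$) consists, for each $p\in\mathcal P$, of the edge of $(X\cup Y)\cap p$ occurring first (resp. last) along $p$. $X\le Y$ means every directed $s$-$t$ path meets an edge of $X$ at or before an edge of $Y$. $U^k_{\mathrm{lr}}$ is the set of $k$-tuples $[X_1,\dots,X_k]$ of elements of $\Gamma_G(s,t)$ with $X_i\le X_j$ for all $i<j$. $L^*$ is the lattice on $U^k_{\mathrm{lr}}$ with componentwise order ($[X_i]\preceq[Y_i]$ iff $X_i\le Y_i$ for all $i$), join $[X_i]_i\vee[Y_i]_i=[S_{\max}(X_i\cup Y_i)]_i$ and meet $[X_i]_i\wedge[Y_i]_i=[S_{\min}(X_i\cup Y_i)]_i$. For $C=[X_1,\dots,X_k]$, $\mu_e(C)$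 is the number of indices $i$ with $e\in X_i$. *)

(* Defs.v *)
From mathcomp Require Import all_boot.
Set Implicit Arguments. Unset Strict Implicit. Unset Printing Implicit Defensive.

Section Graph.
Variables (V E : finType) (src tgt : E -> V).

Fixpoint walk_from (x : V) (p : seq E) : bool :=
  if p is e :: p' then (src e == x) && walk_from (tgt e) p' else true.

Definition st_path (s t : V) (p : seq E) : bool :=
  [&& walk_from s p, last s (map tgt p) == t & uniq (s :: map tgt p)].

Definition is_cut (s t : V) (X : {set E}) : Prop :=
  forall p, st_path s t p -> has (fun e => e \in X) p.

Definition is_min_cut (s t : V) (X : {set E}) : Prop :=
  is_cut s t X /\ forall Y : {set E}, is_cut s t Y -> #|X| <= #|Y|.

Definition edge_disjoint (p q : seq E) : bool := ~~ has (fun e => e \in p) q.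

Definition max_disjoint_paths (s t : V) (P : seq (seq E)) : Prop :=
  [/\ all (st_path s t) P, pairwise edge_disjoint P &
      forall Q : seq (seq E), all (st_path s t) Q -> pairwise edge_disjoint Q ->
        size Q <= size P].

Definition S_min (P : seq (seq E)) (A : {set E}) : {set E} :=
  [set e | has (fun p => ohead [seq f <- p | f \in A] == Some e) P].
Definition S_max (P : seq (seq E)) (A : {set E}) : {set E} :=
  [set e | has (fun p => ohead (rev [seq f <- p | f \in A]) == Some e) P].

Definition cut_le (s t : V) (X Y : {set E}) : Prop :=
  forall p, st_path s t p ->
    exists i j x y, [/\ i <= j, onth p i = Some x, x \in X,
                        onth p j = Some y & y \in Y].

Definition in_Ulr (s t : V) (k : nat) (C : 'I_k -> {set E}) : Prop :=
  (forall i, is_min_cut s t (C i)) /\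
  (forall i j : 'I_k, i < j -> cut_le s t (C i) (C j)).

Definition Ljoin (P : seq (seq E)) (k : nat) (C1 C2 : 'I_k -> {set E}) :=
  fun i => S_max P (C1 i :|: C2 i).
Definition Lmeet (P : seq (seq E)) (k : nat) (C1 C2 : 'I_k -> {set E}) :=
  fun i => S_min P (C1 i :|: C2 i).

Definition mult (k : nat) (e : E) (C : 'I_k -> {set E}) : nat :=
  #|[set i : 'I_k | e \in C i]|.

End Graph.

(* Main.v *)
Require Import Defs.
From mathcomp Require Import all_boot zify.
Set Implicit Arguments. Unset Strict Implicit. Unset Printing Implicit Defensive.

Lemma card_ind (T : finType) (A : {set T}) : #|A| = \sum_(x : T) (x \in A).
Proof. by rewrite -sum1_card big_mkcond /=; apply: eq_bigr => x _; case: (x \in A). Qed.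

Section Reach.
Variables (V S : finType) (fr to : S -> V) (D : pred S).
Definition srel : rel V := fun x y => [exists a, [&& D a, fr a == x & to a == y]].

Lemma walk_cat x p1 p2 : walk_from fr to x (p1 ++ p2) =
  walk_from fr to x p1 && walk_from fr to (last x (map to p1)) p2.
Proof. by elim: p1 x => //= a p IH x; rewrite IH andbA. Qed.

Lemma connect_walk x y : connect srel x y ->
  exists p, [/\ walk_from fr to x p, all D p & last x (map to p) = y].
Proof.
move/connectP=> [vs pth ->]; elim: vs x pth => [|v vs IH] x /=.
  by move=> _; exists [::].
move/andP=> [/existsP [a /and3P[Da /eqP fa /eqP ta]] pth].
have [q [w1 w2 w3]] := IH v pth.
by exists (a :: q); rewrite /= fa eqxx ta w1 Da w2 w3.
Qed.

Lemma shorten_walk x p : walk_from fr to x p -> exists q,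
  [/\ walk_from fr to x q, uniq (x :: map to q),
      last x (map to q) = last x (map to p) & {subset q <= p}].
Proof.
elim: p x => [|a p IH] x /=.
  by move=> _; exists [::].
move/andP=> [/eqP fa w]; have [q [w1 u1 l1 s1]] := IH _ w.
have sub1 : {subset q <= a :: p} by move=> b bq; rewrite inE s1 ?orbT.
case: (boolP (x \in to a :: map to q)) => xin; last first.
  exists (a :: q); split => //=.
  - by rewrite fa eqxx.
  - by rewrite xin.
  - by move=> b; rewrite !inE => /orP[->|/s1 ->]; rewrite ?orbT.
move: xin; rewrite inE => /orP[/eqP xa|].
  by exists q; split => //; rewrite xa.
move/mapP=> [b bq xb].
move: (bq) => /splitPr Hq; move: w1 u1 l1 s1 sub1; case: {bq}_ / Hq => q1 q2 w1 u1 l1 s1 sub1.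
exists q2; split.
- move: w1; rewrite walk_cat => /andP[_] /= /andP[_]; by rewrite xb.
- move: u1; rewrite map_cat -cat_cons cat_uniq => /and3P[_ _] /=; by rewrite xb.
- by rewrite xb -l1 map_cat last_cat.
- by move=> c cq; apply: sub1; rewrite mem_cat inE cq !orbT.
Qed.

Lemma srel_closed s x a : connect srel s x -> D a -> fr a = x -> connect srel s (to a).
Proof.
move=> c Da fa; apply: (connect_trans c); apply: connect1.
by apply/existsP; exists a; rewrite Da fa !eqxx.
Qed.

Lemma walk_count x p v : walk_from fr to x p ->
  count (fun a => fr a == v) p + (last x (map to p) == v) =
  count (fun a => to a == v) p + (x == v).
Proof.
elim: p x => [|a p IH] x /=; first by rewrite addnC.
move/andP=> [/eqP fa w]; have := IH _ w; rewrite fa; lia.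
Qed.

End Reach.


Section Flow.
Variables (V E : finType) (src tgt : E -> V).

Definition outF (F : {set E}) v := #|[set e in F | src e == v]|.
Definition inF (F : {set E}) v := #|[set e in F | tgt e == v]|.
Definition is_flow s t F n :=
  [/\ forall v, v != s -> v != t -> outF F v = inF F v, inF F s = 0 & outF F s = n].

Lemma sum_fib (f : E -> V) (F : {set E}) (R : {set V}) :
  \sum_(v in R) #|[set e in F | f e == v]| = \sum_e ((e \in F) && (f e \in R)).
Proof.
under eq_bigr do rewrite card_ind.
rewrite exchange_big /=; apply: eq_bigr => e _.
under eq_bigr do rewrite inE.
case: (e \in F) => /=; last by rewrite big1.
rewrite big_mkcond (bigD1 (f e)) //= eqxx big1 ?addn0; first by case: (f e \in R).
by move=> v /negbTE nv; rewrite eq_sym nv; case: (v \in R).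
Qed.

Lemma flow_cut F s t n (R : {set V}) : is_flow s t F n -> s \in R -> t \notin R ->
  n + #|[set e in F | (tgt e \in R) && (src e \notin R)]| =
  #|[set e in F | (src e \in R) && (tgt e \notin R)]|.
Proof.
move=> [cons ins outs] sR tR.
have h1 := sum_fib src F R; have h2 := sum_fib tgt F R.
rewrite (bigD1 s) //= in h1; rewrite (bigD1 s) //= in h2.
have e12 : \sum_(i in R | i != s) #|[set e in F | src e == i]| =
           \sum_(i in R | i != s) #|[set e in F | tgt e == i]|.
  apply: eq_bigr => v /andP[vR vs]; apply: cons => //.
  by apply/eqP=> vt; move: tR; rewrite -vt vR.
have h3 : \sum_e ((e \in F) && (src e \in R)) +
          #|[set e in F | (tgt e \in R) && (src e \notin R)]| =
          \sum_e ((e \in F) && (tgt e \in R)) +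
          #|[set e in F | (src e \in R) && (tgt e \notin R)]|.
  rewrite !card_ind -!big_split /=; apply: eq_bigr => e _; rewrite !inE.
  by case: (e \in F); case: (src e \in R); case: (tgt e \in R).
rewrite /outF /inF in outs ins.
lia.
Qed.

Lemma card_set_seq (T : finType) (Pr : pred T) (p : seq T) : uniq p ->
  #|[set x | (x \in p) && Pr x]| = count Pr p.
Proof.
elim: p => [|a p IH] /=.
  by move=> _; rewrite (_ : [set _ | _] = set0) ?cards0 //; apply/setP => x; rewrite !inE.
move=> /andP[ap up]; case: (boolP (Pr a)) => h /=.
  rewrite (_ : [set _ | _] = a |: [set x | (x \in p) && Pr x]).
    by rewrite cardsU1 inE (negbTE ap) IH.
  apply/setP => x; rewrite !inE; case: (eqVneq x a) => [->|] //=; by rewrite h.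
rewrite (_ : [set _ | _] = [set x | (x \in p) && Pr x]) ?IH //.
apply/setP => x; rewrite !inE; case: (eqVneq x a) => [->|] //=.
by rewrite (negbTE ap) (negbTE h).
Qed.

Lemma card_set_pair (b : bool) (Pr : pred E) (p : seq (E * bool)) : uniq p ->
  #|[set e | ((e, b) \in p) && Pr e]| = count (fun a => (a.2 == b) && Pr a.1) p.
Proof.
elim: p => [|a p IH] /=.
  by move=> _; rewrite (_ : [set _ | _] = set0) ?cards0 //; apply/setP => x; rewrite !inE.
case: a => e0 b0 /= /andP[ap up]; case: (boolP ((b0 == b) && Pr e0)) => h /=.
  move/andP: (h) => [/eqP bb pe].
  rewrite (_ : [set _ | _] = e0 |: [set x | ((x, b) \in p) && Pr x]).
    by rewrite cardsU1 IH // in_set -bb (negbTE ap).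
  apply/setP => x; rewrite !inE; case: (eqVneq x e0) => [->|nx] //=.
    by rewrite bb eqxx pe.
  by rewrite xpair_eqE (negbTE nx).
rewrite (_ : [set _ | _] = [set x | ((x, b) \in p) && Pr x]) ?IH //.
apply/setP => x; rewrite !inE xpair_eqE; case: (eqVneq x e0) => [->|] //=.
by move: h; case: (Pr e0); rewrite ?andbF ?andbT //; case: (b0 =P b) => [->|nb] //= _; rewrite eq_sym; move/eqP: nb => /negbTE ->.
Qed.

End Flow.


Section Menger.
Variables (V E : finType) (src tgt : E -> V).

Lemma count0_notin (S : eqType) (to : S -> V) (s : V) (p : seq S) :
  s \notin map to p -> count (fun a => to a == s) p = 0.
Proof.
move=> sn; apply/eqP; rewrite -leqn0 leqNgt -has_count; apply/hasPn => a ap.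
by apply/negP => /eqP h; move: sn; rewrite -h map_f.
Qed.

Lemma decomp s t : s != t -> forall n F, is_flow src tgt s t F n ->
  exists Q : seq (seq E), [/\ size Q = n, all (st_path src tgt s t) Q,
    pairwise (@edge_disjoint E) Q & all (fun q => all (fun e => e \in F) q) Q].
Proof.
move=> st; elim=> [|n IH] F fl.
  by exists [::].
pose D := (fun e => e \in F).
pose R := [set v | connect (srel src tgt D) s v].
have sR : s \in R by rewrite inE connect0.
have tR : t \in R.
  apply/negPn/negP => tR; have := flow_cut fl sR tR.
  rewrite (_ : [set e in F | (src e \in R) && (tgt e \notin R)] = set0) ?cards0; first lia.
  apply/setP => e; rewrite !inE; apply/negP => /and3P[eF].
  move=> c; by rewrite (@srel_closed _ _ src tgt D s (src e) e c eF).
move: tR; rewrite inE => /connect_walk [p0 [w0 a0 l0]].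
have [p [w u l sub]] := shorten_walk w0.
have pF : all D p by apply/allP => e /sub /(allP a0).
have stp : st_path src tgt s t p by rewrite /st_path w u l l0 eqxx.
have up : uniq p by move: u => /= /andP[_ /map_uniq].
pose F' := [set e in F | e \notin p].
have card1 : forall Pr : pred E, #|[set e in F' | Pr e]| + count Pr p = #|[set e in F | Pr e]|.
  move=> Pr; rewrite -(card_set_seq Pr up) !card_ind -big_split; apply: eq_bigr => e _.
  rewrite !inE; case ep: (e \in p) => /=.
    by have := allP pF e ep; rewrite /D => ->; rewrite andbF.
  by rewrite andbT; case: (e \in F); case: (Pr e).
have wc := fun v => walk_count v w; rewrite l l0 in wc.
have cs0 : count (fun e => tgt e == s) p = 0.
  by apply: count0_notin; move: u => /= /andP[].
case: fl => [cons ins outs].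
have fl' : is_flow src tgt s t F' n.
  split.
  - move=> v vs vt; have := card1 (fun e => src e == v); have := card1 (fun e => tgt e == v).
    have := wc v; have := cons v vs vt; rewrite /outF /inF eq_sym (negbTE vt) eq_sym (negbTE vs).
    lia.
  - have := card1 (fun e => tgt e == s); rewrite /inF in ins *; lia.
  - have := card1 (fun e => src e == s); have := wc s; rewrite /outF in outs *.
    rewrite eqxx eq_sym (negbTE st) cs0; lia.
have [Q [sQ aQ pQ fQ]] := IH F' fl'.
exists (p :: Q); split => /=.
- by rewrite sQ.
- by rewrite stp aQ.
- rewrite pQ andbT; apply/allP => q qQ; rewrite /edge_disjoint; apply/hasPn => e eq.
  by have := allP (allP fQ q qQ) e eq; rewrite inE => /andP[_].
- rewrite pF /=; apply/allP => q qQ; apply/allP => e eq.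
  by have := allP (allP fQ q qQ) e eq; rewrite inE => /andP[].
Qed.

Definition rfr (a : E * bool) := if a.2 then src a.1 else tgt a.1.
Definition rto (a : E * bool) := if a.2 then tgt a.1 else src a.1.

Lemma cross (R : {set V}) x p : x \in R -> walk_from src tgt x p ->
  last x (map tgt p) \notin R -> has (fun e => (src e \in R) && (tgt e \notin R)) p.
Proof.
elim: p x => [|e p IH] x /=; first by move=> ->.
move=> xR /andP[/eqP se w] l; case: (boolP (tgt e \in R)) => tR.
  by rewrite (IH _ tR w l) orbT.
by rewrite se xR.
Qed.

Lemma count_rfr v (p : seq (E * bool)) : count (fun a => rfr a == v) p =
  count (fun a => (a.2 == true) && (src a.1 == v)) p +
  count (fun a => (a.2 == false) && (tgt a.1 == v)) p.
Proof. elim: p => //= [[e []]] p IH /=; rewrite IH /rfr /=; lia. Qed.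

Lemma count_rto v (p : seq (E * bool)) : count (fun a => rto a == v) p =
  count (fun a => (a.2 == true) && (tgt a.1 == v)) p +
  count (fun a => (a.2 == false) && (src a.1 == v)) p.
Proof. elim: p => //= [[e []]] p IH /=; rewrite IH /rto /=; lia. Qed.

Lemma augment s t (X : {set E}) F n : s != t -> is_cut src tgt s t X ->
  (forall Y, is_cut src tgt s t Y -> #|X| <= #|Y|) -> is_flow src tgt s t F n ->
  n < #|X| -> exists F', is_flow src tgt s t F' n.+1.
Proof.
move=> st cX mX fl nX.
pose D := (fun a : E * bool => if a.2 then a.1 \notin F else a.1 \in F).
pose R := [set v | connect (srel rfr rto D) s v].
have sR : s \in R by rewrite inE connect0.
have tR : t \in R.
  apply/negPn/negP => tR; have := flow_cut fl sR tR.
  pose K := [set e | (src e \in R) && (tgt e \notin R)].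
  have cK : is_cut src tgt s t K.
    move=> p /and3P[w /eqP l _]; have := cross sR w; rewrite l => /(_ tR).
    by apply: sub_has => e h; rewrite /K in_set.
  have := mX K cK.
  rewrite (_ : [set e in F | (tgt e \in R) && (src e \notin R)] = set0) ?cards0.
    rewrite (_ : [set e in F | (src e \in R) && (tgt e \notin R)] = K); first lia.
    apply/setP => e; rewrite !inE.
    set a := connect _ s (src e); set b := connect _ s (tgt e).
    case: (boolP a) => c /=; last by rewrite andbF.
    case: (boolP b) => tRe /=; first by rewrite andbF.
    rewrite andbT; apply/negPn/negP => eF.
    by move: tRe; rewrite /b (@srel_closed _ _ rfr rto D s (src e) (e, true) c eF).
  apply/setP => e; rewrite !inE; apply/negP => /and3P[eF].
  move=> c; by rewrite (@srel_closed _ _ rfr rto D s (tgt e) (e, false) c eF).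
move: tR; rewrite inE => /connect_walk [p0 [w0 a0 l0]].
have [p [w u l sub]] := shorten_walk w0.
have pD : all D p by apply/allP => e /sub /(allP a0).
have up : uniq p by move: u => /= /andP[_ /map_uniq].
pose Fw := [set e | (e, true) \in p].
pose Bw := [set e | (e, false) \in p].
pose F' := (F :|: Fw) :\: Bw.
have card1 : forall Pr : pred E,
  #|[set e in F' | Pr e]| + count (fun a => (a.2 == false) && Pr a.1) p =
  #|[set e in F | Pr e]| + count (fun a => (a.2 == true) && Pr a.1) p.
  move=> Pr; rewrite -!card_set_pair // !card_ind -!big_split; apply: eq_bigr => e _.
  rewrite !inE.
  have h1 := allP pD (e, true); have h2 := allP pD (e, false); rewrite /D /= in h1 h2.
  move: h1 h2; case: ((e, true) \in p); case: ((e, false) \in p); case: (e \in F);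
  case: (Pr e) => //= h1 h2; by [have := h1 isT | have := h2 isT].
have wc := fun v => walk_count v w; rewrite l l0 in wc.
have cs0 : count (fun a => rto a == s) p = 0.
  by apply: count0_notin; move: u => /= /andP[].
case: fl => [cons ins outs].
exists F'; split.
- move=> v vs vt; have := card1 (fun e => src e == v); have := card1 (fun e => tgt e == v).
  have := wc v; have := cons v vs vt; rewrite /outF /inF eq_sym (negbTE vt) eq_sym (negbTE vs).
  rewrite count_rfr count_rto; lia.
- have := card1 (fun e => tgt e == s); have := card1 (fun e => src e == s).
  move: cs0; rewrite count_rto /inF /outF in ins outs *; lia.
- have := card1 (fun e => tgt e == s); have := card1 (fun e => src e == s); have := wc s.
  move: cs0; rewrite count_rto count_rfr eqxx eq_sym (negbTE st) /inF /outF in ins outs *; lia.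
Qed.

End Menger.


Section Final.
Variables (V E : finType) (src tgt : E -> V).

Lemma menger s t P X : max_disjoint_paths src tgt s t P ->
  is_min_cut src tgt s t X -> #|X| <= size P.
Proof.
move=> [aP pP mP] [cX mX].
have st : s != t.
  apply/eqP => st; have := cX [::]; rewrite /st_path /= st eqxx /=; by move/(_ isT).
have hf : forall n, n <= #|X| -> exists F, is_flow src tgt s t F n.
  elim=> [|n IH] hn.
    have e0 : forall f : E -> V, forall v, #|[set e in (set0 : {set E}) | f e == v]| = 0.
      by move=> f v; rewrite (_ : [set e in set0 | _] = set0) ?cards0 //; apply/setP => e; rewrite !inE.
    by exists set0; split; [move=> v _ _| |]; rewrite /outF /inF !e0.
  have [F fl] := IH (ltnW hn); exact: augment st cX mX fl hn.
have [F fl] := hf _ (leqnn _).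
have [Q [sQ aQ pQ _]] := decomp st fl.
by rewrite -sQ; apply: mP.
Qed.

Lemma sum_disj (X : {set E}) (P : seq (seq E)) : pairwise (@edge_disjoint E) P ->
  #|[set e in X | has (fun q => e \in q) P]| = \sum_(q <- P) #|[set e in X | e \in q]|.
Proof.
elim: P => [|q P IH] /=.
  by move=> _; rewrite big_nil (_ : [set _ in _ | _] = set0) ?cards0 //; apply/setP => e; rewrite !inE andbF.
move/andP=> [aq pP]; rewrite big_cons -IH // !card_ind -big_split; apply: eq_bigr => e _.
rewrite !inE; case eq: (e \in q) => /=; case hP: (has _ P) => /=; case: (e \in X) => //.
move/hasP: hP => [q' q'P eq']; have := allP aq q' q'P; rewrite /edge_disjoint.
by move/hasPn/(_ e eq'); rewrite eq.
Qed.

Lemma sum_ge_size (T : eqType) (l : seq T) (f : T -> nat) :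
  (forall q, q \in l -> 0 < f q) -> size l <= \sum_(q <- l) f q.
Proof.
elim: l => [|a l IH] h; first by rewrite big_nil.
rewrite big_cons /=; have := h a (mem_head _ _).
have := IH (fun q hq => h q (mem_behead (s := a :: l) hq)); rewrite /=; lia.
Qed.

Lemma sum_ones (T : eqType) (l : seq T) (f : T -> nat) :
  (forall q, q \in l -> 0 < f q) -> \sum_(q <- l) f q <= size l ->
  forall q, q \in l -> f q = 1.
Proof.
elim: l => [|a l IH] h //; rewrite big_cons /= => hs q; rewrite inE => /orP[/eqP ->|ql].
  have := h a (mem_head _ _); have := sum_ge_size (fun q hq => h q (mem_behead (s := a :: l) hq)); rewrite /=; lia.
apply: IH => //; first by move=> r hr; apply: h; rewrite inE hr orbT.
have := h a (mem_head _ _); lia.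
Qed.

Lemma one_per_path s t P X : max_disjoint_paths src tgt s t P ->
  is_min_cut src tgt s t X ->
  (forall q, q \in P -> #|[set e in X | e \in q]| = 1) /\
  (forall e, e \in X -> has (fun q => e \in q) P).
Proof.
move=> hP hX; have le := menger hP hX.
case: hP => [aP pP _]; case: hX => [cX _].
have hs := sum_disj X pP.
have pos : forall q, q \in P -> 0 < #|[set e in X | e \in q]|.
  move=> q qP; have := cX q (allP aP q qP) => /hasP [e eq eX].
  by apply/card_gt0P; exists e; rewrite !inE eX eq.
have sub : #|[set e in X | has (fun q => e \in q) P]| <= #|X|.
  by apply: subset_leq_card; apply/subsetP => e; rewrite inE => /andP[].
split.
  move=> q qP; apply: (sum_ones pos) => //; rewrite -hs; exact: leq_trans sub le.
have ge := sum_ge_size pos.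
have eqX : [set e in X | has (fun q => e \in q) P] = X.
  apply/eqP; rewrite eqEcard; apply/andP; split; last by rewrite hs; exact: leq_trans le ge.
  by apply/subsetP => e; rewrite inE => /andP[].
by move=> e; rewrite -{1}eqX inE => /andP[].
Qed.

End Final.


Section Pt.
Variables (V E : finType) (src tgt : E -> V).

Lemma uniq_owner (P : seq (seq E)) e q1 q2 : pairwise (@edge_disjoint E) P ->
  q1 \in P -> q2 \in P -> e \in q1 -> e \in q2 -> q1 = q2.
Proof.
elim: P => [|a P IH] //= /andP[aa pP].
have dis : forall q, q \in P -> e \in a -> e \in q -> False.
  move=> q qP ea eq; have := allP aa q qP; rewrite /edge_disjoint.
  by move/hasPn/(_ e eq); rewrite ea.
rewrite !inE => /orP[/eqP->|h1] /orP[/eqP->|h2] e1 e2 //.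
- by case: (dis _ h2 e1 e2).
- by case: (dis _ h1 e2 e1).
- exact: IH.
Qed.

Lemma ohead_mem (T : eqType) (s : seq T) x : ohead s == Some x -> x \in s.
Proof. by case: s => //= a l /eqP [->]; rewrite inE eqxx. Qed.

Lemma two_el (T : eqType) (a b x y e : T) : a != b -> (x==a)||(x==b) ->
  (y==a)||(y==b) -> (a==x)||(a==y) -> (b==x)||(b==y) ->
  (b == e) + (a == e) = (e == x) + (e == y).
Proof.
move=> nab hx hy ha hb.
case/orP: hx => /eqP ?; case/orP: hy => /eqP ?; subst.
- by move: hb; rewrite orbb eq_sym (negbTE nab).
- by rewrite addnC !(eq_sym e).
- by rewrite !(eq_sym e).
- by move: ha; rewrite orbb (negbTE nab).
Qed.

Lemma pointwise s t P X Y e : max_disjoint_paths src tgt s t P ->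
  is_min_cut src tgt s t X -> is_min_cut src tgt s t Y ->
  (e \in S_max P (X :|: Y)) + (e \in S_min P (X :|: Y)) = (e \in X) + (e \in Y).
Proof.
move=> hP hX hY.
have [X1 X2] := one_per_path hP hX; have [Y1 Y2] := one_per_path hP hY.
case: hP => [aP pP _].
case: (boolP (has (fun q => e \in q) P)) => [/hasP [q qP eq] | hn]; last first.
  have nX : e \notin X by apply/negP => /X2; rewrite (negbTE hn).
  have nY : e \notin Y by apply/negP => /Y2; rewrite (negbTE hn).
  rewrite (negbTE nX) (negbTE nY) !inE.
  have hn' : forall q, q \in P -> e \notin q by move=> q qP; apply/negP => eq; move/hasP: hn; apply; exists q.
  rewrite (_ : has _ P = false); last first.
    apply/negbTE/hasPn => q qP; apply/negP => /ohead_mem; rewrite ?mem_rev mem_filter => /andP[_ eq].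
    by move: (hn' q qP); rewrite eq.
  rewrite (_ : has _ P = false) //.
  apply/negbTE/hasPn => q qP; apply/negP => /ohead_mem; rewrite ?mem_rev mem_filter => /andP[_ eq].
  by move: (hn' q qP); rewrite eq.
have uq : uniq q.
  by have := allP aP q qP; rewrite /st_path => /and3P[_ _ /= /andP[_ /map_uniq]].
have hmin : (e \in S_min P (X :|: Y)) = (ohead [seq f <- q | f \in X :|: Y] == Some e).
  rewrite inE; apply/hasP/idP => [[q' q'P h]|h]; last by exists q.
  have eq' : e \in q' by move: h => /ohead_mem; rewrite mem_filter => /andP[].
  by rewrite (uniq_owner pP qP q'P eq eq').
have hmax : (e \in S_max P (X :|: Y)) = (ohead (rev [seq f <- q | f \in X :|: Y]) == Some e).
  rewrite inE; apply/hasP/idP => [[q' q'P h]|h]; last by exists q.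
  have eq' : e \in q' by move: h => /ohead_mem; rewrite mem_rev mem_filter => /andP[].
  by rewrite (uniq_owner pP qP q'P eq eq').
have [x0 hx] : exists x0, [set f in X | f \in q] = [set x0] by apply/cards1P; rewrite X1.
have [y0 hy] : exists y0, [set f in Y | f \in q] = [set y0] by apply/cards1P; rewrite Y1.
have mX : forall f, f \in q -> (f \in X) = (f == x0).
  by move=> f fq; move/setP: (hx) => /(_ f); rewrite !inE fq andbT.
have mY : forall f, f \in q -> (f \in Y) = (f == y0).
  by move=> f fq; move/setP: (hy) => /(_ f); rewrite !inE fq andbT.
have x0q : x0 \in q by move/setP: (hx) => /(_ x0); rewrite !inE eqxx => /andP[].
have y0q : y0 \in q by move/setP: (hy) => /(_ y0); rewrite !inE eqxx => /andP[].
have mf : forall f, (f \in [seq f <- q | f \in X :|: Y]) = (f == x0) || (f == y0).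
  move=> f; rewrite mem_filter !inE; case fq: (f \in q).
    by rewrite andbT mX // mY.
  rewrite andbF; apply/esym/negbTE/norP; split; apply/eqP => h; move: fq; by rewrite h ?x0q ?y0q.
have uf : uniq [seq f <- q | f \in X :|: Y] by apply: filter_uniq.
rewrite hmin hmax mX // mY //.
have se : forall u v : E, (Some u == Some v) = (u == v) by move=> u v; apply/eqP/eqP => [[]|->].
move: mf uf; set L := [seq f <- q | _]; case: L => [|a [|b [|c l]]] /= mf uf.
- by have := mf x0; rewrite in_nil eqxx.
- have := mf x0; have := mf y0; rewrite !inE !eqxx orbT /= => /eqP <- /eqP <-.
  by rewrite eq_sym.
- have := mf a; have := mf b; have := mf x0; have := mf y0.
  rewrite !inE !eqxx !orbT /=; move: uf; rewrite inE andbT.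
  move=> nab h1 h2 h3 h4; rewrite !se; apply: two_el => //; by rewrite ?h3 ?h4.
- have := mf a; have := mf b; have := mf c.
  rewrite !inE !eqxx !orbT /=; move: uf; rewrite !inE.
  move=> /andP[/norP[nab nac] /andP[nbc _]] hc hb ha.
  move/esym: ha => /orP[/eqP ea|/eqP ea]; move/esym: hb => /orP[/eqP eb|/eqP eb];
  move/esym: hc => /orP[/eqP ec|/eqP ec]; subst;
  by rewrite ?eqxx in nab nac nbc.
Qed.

End Pt.

Theorem lemma3 (V E : finType) (src tgt : E -> V) (s t : V)
    (P : seq (seq E)) (k : nat) (e : E)
    (hP : max_disjoint_paths src tgt s t P) (hk : 1 <= k)
    (C1 C2 : 'I_k -> {set E}) :
  in_Ulr src tgt s t C1 -> in_Ulr src tgt s t C2 ->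
  mult e (Ljoin P C1 C2) + mult e (Lmeet P C1 C2) = mult e C1 + mult e C2.
Proof.
move=> [h1 _] [h2 _]; rewrite /mult !card_ind -!big_split; apply: eq_bigr => i _.
have := pointwise e hP (h1 i) (h2 i); rewrite !inE /Ljoin /Lmeet => H; exact: H.
Qed.
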